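(* Let $R$ be a ring with identity and an involution $*$, and let $a,b,c\in R$. Then: (i) $a$ is left $(b,c)$-invertible if and only if $a^*$ is right $(c^*,b^* )$-invertible; (ii) if $b$ and $c$ are regular, then $a$ is left annihilator $(b,c)$-invertible if and only if $a^*$ is right annihilator $(c^*,b^* )$-invertible.
   Context: An involution is a map $*:R\to R$ with $(x^* )^*=x$, $(xy)^*=y^*x^*$, $(x+y)^*=x^*+y^*$. An element $x$ is regular if $x=xzx$ for some $z\in R$. For $x\in R$: $xR=\{xr:r\in R\}$, $Rx=\{rx:r\in R\}$, $x^\circ=\{r: xr=0\}$, ${}^\circ x=\{r: rx=0\}$. An element $a$ is left $(b,c)$-invertible if there is $y$ with $Ry\subseteq Rc$ and $yab=b$; right $(b,c)$-invertible if there is $y$ with $yR\subseteq bR$ and $cay=c$; right annihilator $(b,c)$-invertible if there is $y$ with $c^\circ\subseteq y^\circ$ and $yab=b$; left annihilator $(b,c)$-invertible if there is $y$ with ${}^\circ b\subseteq {}^\circ y$ and $cay=c$. *)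

(* Defs.v *)
From mathcomp Require Import all_boot all_algebra.
Set Implicit Arguments. Unset Strict Implicit. Unset Printing Implicit Defensive.
Import GRing.Theory.
Local Open Scope ring_scope.

Definition involution (R : pzRingType) (s : R -> R) : Prop :=
  (forall x, s (s x) = x) /\
  (forall x y, s (x * y) = s y * s x) /\
  (forall x y, s (x + y) = s x + s y).

Definition regular (R : pzRingType) (x : R) : Prop := exists z, x = x * z * x.

Definition in_rideal (R : pzRingType) (x t : R) : Prop := exists r, t = x * r.
Definition in_lideal (R : pzRingType) (x t : R) : Prop := exists r, t = r * x.
Definition in_rann (R : pzRingType) (x r : R) : Prop := x * r = 0.
Definition in_lann (R : pzRingType) (x r : R) : Prop := r * x = 0.

Definition left_bc_inv (R : pzRingType) (a b c : R) : Prop :=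
  exists y, (forall t, in_lideal y t -> in_lideal c t) /\ y * a * b = b.
Definition right_bc_inv (R : pzRingType) (a b c : R) : Prop :=
  exists y, (forall t, in_rideal y t -> in_rideal b t) /\ c * a * y = c.
Definition right_ann_bc_inv (R : pzRingType) (a b c : R) : Prop :=
  exists y, (forall r, in_rann c r -> in_rann y r) /\ y * a * b = b.
Definition left_ann_bc_inv (R : pzRingType) (a b c : R) : Prop :=
  exists y, (forall r, in_lann b r -> in_lann y r) /\ c * a * y = c.

(* Main.v *)
Require Import Defs.
From mathcomp Require Import all_boot all_algebra.
Import GRing.Theory.
Local Open Scope ring_scope.

Theorem proposition2p8 (R : pzRingType) (s : R -> R) (a b c : R) :
  involution s ->
  (left_bc_inv a b c <-> right_bc_inv (s a) (s c) (s b)) /\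
  (regular b -> regular c ->
     (left_ann_bc_inv a b c <-> right_ann_bc_inv (s a) (s c) (s b))).
Proof.
move=> [ss [sM sD]].
have s0 : s 0 = 0.
  by apply: (GRing.addrI (s 0)); rewrite GRing.addr0 -sD GRing.addr0.
have sinj : forall x y, s x = s y -> x = y.
  by move=> x y h; rewrite -(ss x) -(ss y) h.
split.
- split.
  + move=> [y [Hy Hb]]; exists (s y); split.
    * have [r Er] := Hy y (ex_intro _ 1 (esym (GRing.mul1r y))).
      move=> t [r' ->]; exists (s r * r').
      by rewrite Er sM GRing.mulrA.
    * by rewrite -!sM GRing.mulrA Hb.
  + move=> [y [Hy Hb]]; exists (s y); split.
    * have [r Er] := Hy y (ex_intro _ 1 (esym (GRing.mulr1 y))).
      move=> t [r' ->]; exists (r' * s r).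
      by rewrite Er sM ss GRing.mulrA.
    * by apply: sinj; rewrite !sM ss GRing.mulrA.
- move=> _ _; split.
  + move=> [y [Hy Hc]]; exists (s y); split.
    * move=> r Hr; rewrite /in_rann in Hr *.
      have : in_lann b (s r) by rewrite /in_lann; apply: sinj; rewrite sM ss Hr s0.
      move/Hy; rewrite /in_lann => h.
      by rewrite -(ss r) -sM h s0.
    * by rewrite -!sM GRing.mulrA Hc.
  + move=> [y [Hy Hc]]; exists (s y); split.
    * move=> r Hr; rewrite /in_lann in Hr *.
      have : in_rann (s b) (s r) by rewrite /in_rann -sM Hr s0.
      move/Hy; rewrite /in_rann => h.
      by apply: sinj; rewrite sM ss h s0.
    * by apply: sinj; rewrite !sM ss GRing.mulrA.
Qed.
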